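(* Let $W, w_1,w_2,w_3,c_1,c_2,c_3$ be positive integers with $w_1<w_2<w_3$, $c_1<c_2<c_3$ and $\frac{c_1}{w_1}>\frac{c_2}{w_2}>\frac{c_3}{w_3}$. Let $D=\{(z_1,z_2)\in(\mathbb{Z}_{\ge 0})^2: z_iw_i\le W/2,\ i=1,2\}$ and define $C:D\to\mathbb{R}$ by $C(z_1,z_2)=c_1z_1+c_2z_2+c_3\left\lceil\frac{W-w_1z_1-w_2z_2}{w_3}\right\rceil$. Then $(D,C)$ is an Ameso($c_3$) pair, i.e., minimizing $C$ over $D$ is an Ameso($c_3$) optimization problem.
   Context: Floors and ceilings of vectors are taken componentwise. A set $D^n\subseteq\mathbb{Z}^n$ is an Ameso set if $\lceil(\vec x+\vec y)/2\rceil,\lfloor(\vec x+\vec y)/2\rfloor\in D^n$ for all $\vec x,\vec y\in D^n$. For $K\ge 0$, $(D^n,f)$ is an Ameso($K$) pair if $D^n$ is an Ameso set, $f:D^n\to\mathbb{R}$ is bounded below, and $f(\vec x)+f(\vec y)+K\ge f(\lceil(\vec x+\vec y)/2\rceil)+f(\lfloor(\vec x+\vec y)/2\rfloor)$ for all $\vec x,\vec y\in D^n$; minimizing $f$ over $D^n$ is then called an Ameso($K$) optimization problem. *)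

(* Defs.v *)
(* Integer vectors in Z^n are row vectors 'rV[int]_n. *)
From HB Require Import structures.
From mathcomp Require Import all_boot all_order all_algebra.
From mathcomp Require Import reals.
Set Implicit Arguments. Unset Strict Implicit. Unset Printing Implicit Defensive.
Import Order.TTheory GRing.Theory Num.Theory.
Local Open Scope ring_scope.

Definition vceil_mid (n : nat) (x y : 'rV[int]_n) : 'rV[int]_n :=
  \row_i Num.ceil (((x 0 i + y 0 i)%:~R : rat) / 2).
Definition vfloor_mid (n : nat) (x y : 'rV[int]_n) : 'rV[int]_n :=
  \row_i Num.floor (((x 0 i + y 0 i)%:~R : rat) / 2).

Definition ameso_set (n : nat) (D : pred 'rV[int]_n) : Prop :=
  forall x y, D x -> D y -> D (vceil_mid x y) /\ D (vfloor_mid x y).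

(* (D, f) is an Ameso(K) pair; f is only relevant on D *)
Definition ameso_pair (R : realType) (n : nat) (K : R)
    (D : pred 'rV[int]_n) (f : 'rV[int]_n -> R) : Prop :=
  0 <= K /\ ameso_set D /\
  (exists m : R, forall x, D x -> m <= f x) /\
  (forall x y, D x -> D y ->
     f (vceil_mid x y) + f (vfloor_mid x y) <= f x + f y + K).

(* Main.v *)
Require Import Defs.
From HB Require Import structures.
From mathcomp Require Import all_boot all_order all_algebra.
From mathcomp Require Import reals.
From mathcomp Require Import zify ring lra.
Import Order.TTheory GRing.Theory Num.Theory.
Local Open Scope ring_scope.

Lemma mid_facts (a b : int) :
  let p := Num.ceil (((a + b)%:~R : rat) / 2) in
  let q := Num.floor (((a + b)%:~R : rat) / 2) in
  p + q = a + b /\ (p <= a \/ p <= b) /\ (a <= q \/ b <= q) /\ q <= p.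
Proof.
move=> p q.
have [h1 h2] := andP (ceil_itv (((a + b)%:~R : rat) / 2)).
have [h3 h4] := andP (floor_itv (((a + b)%:~R : rat) / 2)).
rewrite -/p in h1 h2; rewrite -/q in h3 h4.
have e1 : (a + b)%:~R <= (2 * p)%:~R :> rat by rewrite intrM; lra.
have e2 : (2 * p)%:~R < (a + b + 2)%:~R :> rat.
  by rewrite intrM !intrD in h1 *; lra.
have e3 : (2 * q)%:~R <= (a + b)%:~R :> rat by rewrite intrM; lra.
have e4 : (a + b - 2)%:~R < (2 * q)%:~R :> rat.
  by rewrite intrM !intrD in h4 *; lra.
move: e1 e2 e3 e4; rewrite !ler_int !ltr_int => e1 e2 e3 e4.
lia.
Qed.

Lemma ceil_sum (R : realType) (A B A' B' : R) : A + B = A' + B' ->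
  Num.ceil A + Num.ceil B <= Num.ceil A' + Num.ceil B' + 1.
Proof.
move=> e.
have [h1 h2] := andP (ceil_itv A).
have [h3 h4] := andP (ceil_itv B).
have [h5 h6] := andP (ceil_itv A').
have [h7 h8] := andP (ceil_itv B').
have : (Num.ceil A + Num.ceil B)%:~R < (Num.ceil A' + Num.ceil B' + 2)%:~R :> R.
  by rewrite !intrD in h1 h3 h5 h7 *; lra.
rewrite ltr_int; lia.
Qed.

Lemma le_mulw (R : realType) (u a w : int) (X : R) : 0 < w -> u <= a ->
  (a * w)%:~R <= X -> (u * w)%:~R <= X.
Proof.
move=> hw hua h; apply: le_trans h; rewrite ler_int ler_wpM2r //; exact: ltW.
Qed.

Theorem theorem5 (R : realType) (W w1 w2 w3 c1 c2 c3 : int) :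
  0 < W -> 0 < w1 -> 0 < w2 -> 0 < w3 -> 0 < c1 -> 0 < c2 -> 0 < c3 ->
  w1 < w2 -> w2 < w3 -> c1 < c2 -> c2 < c3 ->
  (c2%:~R / w2%:~R : R) < c1%:~R / w1%:~R ->
  (c3%:~R / w3%:~R : R) < c2%:~R / w2%:~R ->
  let D : pred 'rV[int]_2 := fun z =>
    [&& 0 <= z 0 0, 0 <= z 0 1,
        (z 0 0 * w1)%:~R <= (W%:~R / 2 : R) &
        (z 0 1 * w2)%:~R <= (W%:~R / 2 : R)] in
  let C : 'rV[int]_2 -> R := fun z =>
    c1%:~R * (z 0 0)%:~R + c2%:~R * (z 0 1)%:~R
    + c3%:~R * (Num.ceil ((W - w1 * z 0 0 - w2 * z 0 1)%:~R / w3%:~R : R))%:~R in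
  ameso_pair c3%:~R D C.
Proof.
move=> hW hw1 hw2 hw3 hc1 hc2 hc3 _ _ _ _ _ _ D C.
split; first by rewrite ler0z ltW.
split.
  move=> x y /and4P[hx0 hx1 hx2 hx3] /and4P[hy0 hy1 hy2 hy3].
  rewrite /D /vceil_mid /vfloor_mid !mxE.
  have [e1 [f1 [g1 k1]]] := mid_facts (x 0 0) (y 0 0).
  have [e2 [f2 [g2 k2]]] := mid_facts (x 0 1) (y 0 1).
  split; apply/and4P; split.
  - lia.
  - lia.
  - by case: f1 => f1; [apply: le_mulw hx2 | apply: le_mulw hy2].
  - by case: f2 => f2; [apply: le_mulw hx3 | apply: le_mulw hy3].
  - lia.
  - lia.
  - by case: f1 => f1; [apply: le_mulw hx2 | apply: le_mulw hy2] => //; lia.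
  - by case: f2 => f2; [apply: le_mulw hx3 | apply: le_mulw hy3] => //; lia.
split.
  exists 0 => z /and4P[hz0 hz1 hz2 hz3]; rewrite /C.
  have hA : 0 <= ((W - w1 * z 0 0 - w2 * z 0 1)%:~R / w3%:~R : R).
    apply: divr_ge0; last by rewrite ler0z ltW.
    rewrite !intrD !intrN !intrM; rewrite !intrM in hz2 hz3; lra.
  have [_ hc] := andP (ceil_itv ((W - w1 * z 0 0 - w2 * z 0 1)%:~R / w3%:~R : R)).
  apply: addr_ge0; first apply: addr_ge0.
  - by apply: mulr_ge0; rewrite ler0z // ltW.
  - by apply: mulr_ge0; rewrite ler0z // ltW.
  - apply: mulr_ge0; first by rewrite ler0z ltW.
    exact: le_trans hA hc.
move=> x y _ _; rewrite /C /vceil_mid /vfloor_mid !mxE.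
have [e1 _] := mid_facts (x 0 0) (y 0 0).
have [e2 _] := mid_facts (x 0 1) (y 0 1).
set u := Num.ceil (((x 0 0 + y 0 0)%:~R : rat) / 2) in e1 *.
set u' := Num.floor (((x 0 0 + y 0 0)%:~R : rat) / 2) in e1 *.
set v := Num.ceil (((x 0 1 + y 0 1)%:~R : rat) / 2) in e2 *.
set v' := Num.floor (((x 0 1 + y 0 1)%:~R : rat) / 2) in e2 *.
have eu : u' = x 0 0 + y 0 0 - u by lia.
have ev : v' = x 0 1 + y 0 1 - v by lia.
have hc := @ceil_sum R ((W - w1 * u - w2 * v)%:~R / w3%:~R : R)
  ((W - w1 * u' - w2 * v')%:~R / w3%:~R : R)
  ((W - w1 * x 0 0 - w2 * x 0 1)%:~R / w3%:~R : R)
  ((W - w1 * y 0 0 - w2 * y 0 1)%:~R / w3%:~R : R).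
have : ((W - w1 * u - w2 * v)%:~R / w3%:~R : R) +
  ((W - w1 * u' - w2 * v')%:~R / w3%:~R : R) =
  ((W - w1 * x 0 0 - w2 * x 0 1)%:~R / w3%:~R : R) +
  ((W - w1 * y 0 0 - w2 * y 0 1)%:~R / w3%:~R : R).
  by rewrite -!mulrDl -!intrD eu ev; congr (_%:~R / _); ring.
move=> /hc {}hc.
move: hc; rewrite -(ler_int R) !intrD => hc.
have h3R : (0:R) < c3%:~R by rewrite ltr0z.
have hc' := ler_wpM2l (ltW h3R) hc.
rewrite eu ev !intrD !intrN in hc' *.
set a := Num.ceil _ in hc hc' *.
set b := Num.ceil _ in hc hc' *.
set a' := Num.ceil _ in hc hc' *.
set b' := Num.ceil _ in hc hc' *.
lra.
Qed.
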